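(* Let $x_1,x_2,x_3,x_4\in\mathbb{Z}^3$ be the vertices of a Fano tetrahedron, and let $\lambda_1,\ldots,\lambda_4$ be non-negative integers with $\gcd(\lambda_1,\ldots,\lambda_4)=1$ such that, with $h=\lambda_1+\cdots+\lambda_4$, $\sum_i\lambda_ix_i=0$ (so $\lambda_i/h$ are the barycentric coordinates of the origin). Then (i) $\sum_{i=1}^4\left\lceil\frac{\kappa\lambda_i}{h}\right\rceil=\kappa+2$ for all integers $\kappa\in\{2,\ldots,h-2\}$, and (ii) $\gcd(\lambda_i,h)=1$ for $i=1,\ldots,4$.
   Context: A tetrahedron is called Fano if its vertices lie in $\mathbb{Z}^3$ and the only lattice point it contains other than its vertices is the origin, which lies strictly in its interior. $\lceil q\rceil=\min\{a\in\mathbb{Z}: a\ge q\}$. *)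

(* Defs.v *)
From Stdlib Require Import ZArith Reals QArith Qround.

Definition pt := (Z * Z * Z)%type.
Definition cx (p : pt) : Z := fst (fst p).
Definition cy (p : pt) : Z := snd (fst p).
Definition cz (p : pt) : Z := snd p.

Definition in_hull (x1 x2 x3 x4 : pt) (a b c : R) : Prop :=
  exists m1 m2 m3 m4 : R,
    (0 <= m1)%R /\ (0 <= m2)%R /\ (0 <= m3)%R /\ (0 <= m4)%R /\
    (m1 + m2 + m3 + m4 = 1)%R /\
    a = (m1 * IZR (cx x1) + m2 * IZR (cx x2) + m3 * IZR (cx x3) + m4 * IZR (cx x4))%R /\
    b = (m1 * IZR (cy x1) + m2 * IZR (cy x2) + m3 * IZR (cy x3) + m4 * IZR (cy x4))%R /\
    c = (m1 * IZR (cz x1) + m2 * IZR (cz x2) + m3 * IZR (cz x3) + m4 * IZR (cz x4))%R.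

Definition lattice_in_hull (x1 x2 x3 x4 : pt) (p : pt) : Prop :=
  in_hull x1 x2 x3 x4 (IZR (cx p)) (IZR (cy p)) (IZR (cz p)).

Definition origin_in_interior (x1 x2 x3 x4 : pt) : Prop :=
  exists eps : R, (0 < eps)%R /\
    forall a b c : R, (Rabs a < eps)%R -> (Rabs b < eps)%R -> (Rabs c < eps)%R ->
      in_hull x1 x2 x3 x4 a b c.

Definition sub (p q : pt) : pt := (cx p - cx q, cy p - cy q, cz p - cz q)%Z.

Definition det3 (u v w : pt) : Z :=
  (cx u * (cy v * cz w - cz v * cy w)
   - cy u * (cx v * cz w - cz v * cx w)
   + cz u * (cx v * cy w - cy v * cx w))%Z.

Definition nondegenerate (x1 x2 x3 x4 : pt) : Prop :=
  det3 (sub x2 x1) (sub x3 x1) (sub x4 x1) <> 0%Z.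

Definition origin : pt := (0, 0, 0)%Z.

Definition fano_tetrahedron (x1 x2 x3 x4 : pt) : Prop :=
  nondegenerate x1 x2 x3 x4 /\
  origin_in_interior x1 x2 x3 x4 /\
  forall p : pt, lattice_in_hull x1 x2 x3 x4 p ->
    p = origin \/ p = x1 \/ p = x2 \/ p = x3 \/ p = x4.

Definition ceil_frac (n h : Z) : Z := Qceiling (inject_Z n / inject_Z h)%Q.

(* Main.v *)
Require Import Defs.
From Stdlib Require Import ZArith Reals QArith Qround Lia Lra.

Lemma ceil_eq n h : (0 < h)%Z -> ceil_frac n h = (- ((- n) / h))%Z.
Proof. intros H. destruct h as [|p|p]; try lia.
unfold ceil_frac, Qceiling, Qfloor, Qdiv, Qmult, Qinv, inject_Z; simpl.
rewrite Z.mul_1_r. reflexivity. Qed.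

Lemma ceil_bounds n h : (0 < h)%Z ->
  (h * ceil_frac n h - h < n <= h * ceil_frac n h)%Z.
Proof. intros H. rewrite ceil_eq by lia.
pose proof (Z.div_mod (-n) h ltac:(lia)).
pose proof (Z.mod_pos_bound (-n) h H). lia. Qed.

Lemma cramer (ux uy uz vx vy vz wx wy wz a b c : R) :
  (ux*(vy*wz - vz*wy) - uy*(vx*wz - vz*wx) + uz*(vx*wy - vy*wx) <> 0)%R ->
  (a*ux + b*vx + c*wx = 0)%R -> (a*uy + b*vy + c*wy = 0)%R ->
  (a*uz + b*vz + c*wz = 0)%R -> a = 0%R /\ b = 0%R /\ c = 0%R.
Proof.
  set (D := (ux*(vy*wz - vz*wy) - uy*(vx*wz - vz*wx) + uz*(vx*wy - vy*wx))%R).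
  intros HD H1 H2 H3.
  assert (Ea : (a * D = (a*ux + b*vx + c*wx)*(vy*wz - vz*wy) - (a*uy + b*vy + c*wy)*(vx*wz - vz*wx) + (a*uz + b*vz + c*wz)*(vx*wy - vy*wx))%R) by (unfold D; ring).
  assert (Eb : (b * D = ux*((a*uy + b*vy + c*wy)*wz - (a*uz + b*vz + c*wz)*wy) - uy*((a*ux + b*vx + c*wx)*wz - (a*uz + b*vz + c*wz)*wx) + uz*((a*ux + b*vx + c*wx)*wy - (a*uy + b*vy + c*wy)*wx))%R) by (unfold D; ring).
  assert (Ec : (c * D = ux*(vy*(a*uz + b*vz + c*wz) - vz*(a*uy + b*vy + c*wy)) - uy*(vx*(a*uz + b*vz + c*wz) - vz*(a*ux + b*vx + c*wx)) + uz*(vx*(a*uy + b*vy + c*wy) - vy*(a*ux + b*vx + c*wx)))%R) by (unfold D; ring).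
  rewrite H1, H2, H3 in Ea, Eb, Ec.
  repeat split.
  - destruct (Rmult_integral a D) as [?|?]; [lra|assumption|contradiction].
  - destruct (Rmult_integral b D) as [?|?]; [lra|assumption|contradiction].
  - destruct (Rmult_integral c D) as [?|?]; [lra|assumption|contradiction].
Qed.

Lemma dep0 (x1 x2 x3 x4 : pt) (n1 n2 n3 n4 : R) :
  nondegenerate x1 x2 x3 x4 -> (n1 + n2 + n3 + n4 = 0)%R ->
  (n1 * IZR (cx x1) + n2 * IZR (cx x2) + n3 * IZR (cx x3) + n4 * IZR (cx x4) = 0)%R ->
  (n1 * IZR (cy x1) + n2 * IZR (cy x2) + n3 * IZR (cy x3) + n4 * IZR (cy x4) = 0)%R ->
  (n1 * IZR (cz x1) + n2 * IZR (cz x2) + n3 * IZR (cz x3) + n4 * IZR (cz x4) = 0)%R ->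
  n1 = 0%R /\ n2 = 0%R /\ n3 = 0%R /\ n4 = 0%R.
Proof.
  destruct x1 as [[a1 b1] c1], x2 as [[a2 b2] c2], x3 as [[a3 b3] c3], x4 as [[a4 b4] c4].
  unfold nondegenerate, det3, sub, cx, cy, cz; simpl.
  intros HD Hs Hx Hy Hz.
  assert (E1 : n1 = (-(n2+n3+n4))%R) by lra.
  rewrite E1 in Hx, Hy, Hz.
  destruct (cramer (IZR a2 - IZR a1) (IZR b2 - IZR b1) (IZR c2 - IZR c1)
                   (IZR a3 - IZR a1) (IZR b3 - IZR b1) (IZR c3 - IZR c1)
                   (IZR a4 - IZR a1) (IZR b4 - IZR b1) (IZR c4 - IZR c1) n2 n3 n4)
    as [A [B C]].
  - intro H0. apply HD. apply eq_IZR.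
    repeat first [rewrite minus_IZR | rewrite plus_IZR | rewrite mult_IZR]. lra.
  - rewrite <- Hx; ring.
  - rewrite <- Hy; ring.
  - rewrite <- Hz; ring.
  - subst. lra.
Qed.

Lemma dep0Z (x1 x2 x3 x4 : pt) (n1 n2 n3 n4 : Z) :
  nondegenerate x1 x2 x3 x4 -> (n1 + n2 + n3 + n4 = 0)%Z ->
  (n1 * cx x1 + n2 * cx x2 + n3 * cx x3 + n4 * cx x4 = 0)%Z ->
  (n1 * cy x1 + n2 * cy x2 + n3 * cy x3 + n4 * cy x4 = 0)%Z ->
  (n1 * cz x1 + n2 * cz x2 + n3 * cz x3 + n4 * cz x4 = 0)%Z ->
  n1 = 0%Z /\ n2 = 0%Z /\ n3 = 0%Z /\ n4 = 0%Z.
Proof.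
  intros HD Hs Hx Hy Hz.
  destruct (dep0 x1 x2 x3 x4 (IZR n1) (IZR n2) (IZR n3) (IZR n4)) as [A [B [C E]]]; auto.
  - rewrite <- !plus_IZR, Hs. reflexivity.
  - rewrite <- !mult_IZR, <- !plus_IZR, Hx. reflexivity.
  - rewrite <- !mult_IZR, <- !plus_IZR, Hy. reflexivity.
  - rewrite <- !mult_IZR, <- !plus_IZR, Hz. reflexivity.
  - repeat split; apply eq_IZR; assumption.
Qed.

Lemma depZ (x1 x2 x3 x4 : pt) (l1 l2 l3 l4 m1 m2 m3 m4 : Z) :
  nondegenerate x1 x2 x3 x4 ->
  (l1 * cx x1 + l2 * cx x2 + l3 * cx x3 + l4 * cx x4 = 0)%Z ->
  (l1 * cy x1 + l2 * cy x2 + l3 * cy x3 + l4 * cy x4 = 0)%Z ->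
  (l1 * cz x1 + l2 * cz x2 + l3 * cz x3 + l4 * cz x4 = 0)%Z ->
  (m1 * cx x1 + m2 * cx x2 + m3 * cx x3 + m4 * cx x4 = 0)%Z ->
  (m1 * cy x1 + m2 * cy x2 + m3 * cy x3 + m4 * cy x4 = 0)%Z ->
  (m1 * cz x1 + m2 * cz x2 + m3 * cz x3 + m4 * cz x4 = 0)%Z ->
  let h := (l1 + l2 + l3 + l4)%Z in let M := (m1 + m2 + m3 + m4)%Z in
  (h * m1 = M * l1 /\ h * m2 = M * l2 /\ h * m3 = M * l3 /\ h * m4 = M * l4)%Z.
Proof.
  intros HD Lx Ly Lz Mx My Mz h M.
  assert (Hh : h = (l1 + l2 + l3 + l4)%Z) by reflexivity.
  assert (HM : M = (m1 + m2 + m3 + m4)%Z) by reflexivity.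
  clearbody h M.
  destruct (dep0Z x1 x2 x3 x4 (h*m1 - M*l1) (h*m2 - M*l2) (h*m3 - M*l3) (h*m4 - M*l4))
    as [A [B [C E]]]; auto; try lia.
  - transitivity (h * (m1 * cx x1 + m2 * cx x2 + m3 * cx x3 + m4 * cx x4) - M * (l1 * cx x1 + l2 * cx x2 + l3 * cx x3 + l4 * cx x4))%Z; [ring| rewrite Mx, Lx; ring].
  - transitivity (h * (m1 * cy x1 + m2 * cy x2 + m3 * cy x3 + m4 * cy x4) - M * (l1 * cy x1 + l2 * cy x2 + l3 * cy x3 + l4 * cy x4))%Z; [ring| rewrite My, Ly; ring].
  - transitivity (h * (m1 * cz x1 + m2 * cz x2 + m3 * cz x3 + m4 * cz x4) - M * (l1 * cz x1 + l2 * cz x2 + l3 * cz x3 + l4 * cz x4))%Z; [ring| rewrite Mz, Lz; ring].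
Qed.

Lemma gcd_div2 (h M a b : Z) : (h | M * a)%Z -> (h | M * b)%Z -> (h | M * Z.gcd a b)%Z.
Proof.
  intros Ha Hb. destruct (Z.gcd_bezout a b (Z.gcd a b) eq_refl) as [u [v E]].
  rewrite <- E. replace (M * (u * a + v * b))%Z with (u * (M * a) + v * (M * b))%Z by ring.
  apply Z.divide_add_r; apply Z.divide_mul_r; assumption.
Qed.

Lemma gcd_div4 (h M l1 l2 l3 l4 : Z) :
  Z.gcd (Z.gcd (Z.gcd l1 l2) l3) l4 = 1%Z ->
  (h | M * l1)%Z -> (h | M * l2)%Z -> (h | M * l3)%Z -> (h | M * l4)%Z -> (h | M)%Z.
Proof.
  intros G H1 H2 H3 H4.
  replace M with (M * Z.gcd (Z.gcd (Z.gcd l1 l2) l3) l4)%Z by (rewrite G; ring).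
  repeat apply gcd_div2; assumption.
Qed.

Lemma hull_of_int (x1 x2 x3 x4 : pt) (N1 N2 N3 N4 h px py pz : Z) :
  (0 < h)%Z -> (0 <= N1)%Z -> (0 <= N2)%Z -> (0 <= N3)%Z -> (0 <= N4)%Z ->
  (N1 + N2 + N3 + N4 = h)%Z ->
  (N1 * cx x1 + N2 * cx x2 + N3 * cx x3 + N4 * cx x4 = h * px)%Z ->
  (N1 * cy x1 + N2 * cy x2 + N3 * cy x3 + N4 * cy x4 = h * py)%Z ->
  (N1 * cz x1 + N2 * cz x2 + N3 * cz x3 + N4 * cz x4 = h * pz)%Z ->
  lattice_in_hull x1 x2 x3 x4 (px, py, pz).
Proof.
  intros Hh H1 H2 H3 H4 Hs Hx Hy Hz.
  apply IZR_lt in Hh. apply IZR_le in H1, H2, H3, H4.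
  apply (f_equal IZR) in Hs, Hx, Hy, Hz.
  rewrite !plus_IZR in Hs. rewrite !plus_IZR, !mult_IZR in Hx, Hy, Hz.
  unfold lattice_in_hull, in_hull; simpl.
  exists (IZR N1 / IZR h)%R, (IZR N2 / IZR h)%R, (IZR N3 / IZR h)%R, (IZR N4 / IZR h)%R.
  assert (Hi : (0 < / IZR h)%R) by (apply Rinv_0_lt_compat; lra).
  repeat split; try (unfold Rdiv; apply Rmult_le_pos; lra).
  - apply (Rmult_eq_reg_l (IZR h)); [| lra]. field_simplify; [|lra]. lra.
  - apply (Rmult_eq_reg_l (IZR h)); [| lra]. change (cx (px,py,pz)) with px. rewrite <- Hx. field. lra.
  - apply (Rmult_eq_reg_l (IZR h)); [| lra]. change (cy (px,py,pz)) with py. rewrite <- Hy. field. lra.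
  - apply (Rmult_eq_reg_l (IZR h)); [| lra]. change (cz (px,py,pz)) with pz. rewrite <- Hz. field. lra.
Qed.

Lemma no_dep (x1 x2 x3 x4 : pt) (l1 l2 l3 l4 m1 m2 m3 m4 : Z) :
  nondegenerate x1 x2 x3 x4 ->
  (l1 * cx x1 + l2 * cx x2 + l3 * cx x3 + l4 * cx x4 = 0)%Z ->
  (l1 * cy x1 + l2 * cy x2 + l3 * cy x3 + l4 * cy x4 = 0)%Z ->
  (l1 * cz x1 + l2 * cz x2 + l3 * cz x3 + l4 * cz x4 = 0)%Z ->
  Z.gcd (Z.gcd (Z.gcd l1 l2) l3) l4 = 1%Z ->
  (0 < m1 + m2 + m3 + m4 < l1 + l2 + l3 + l4)%Z ->
  (m1 * cx x1 + m2 * cx x2 + m3 * cx x3 + m4 * cx x4 = 0)%Z ->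
  (m1 * cy x1 + m2 * cy x2 + m3 * cy x3 + m4 * cy x4 = 0)%Z ->
  (m1 * cz x1 + m2 * cz x2 + m3 * cz x3 + m4 * cz x4 = 0)%Z -> False.
Proof.
  intros ND Lx Ly Lz G R Mx My Mz.
  destruct (depZ x1 x2 x3 x4 l1 l2 l3 l4 m1 m2 m3 m4 ND Lx Ly Lz Mx My Mz) as [A [B [C D]]].
  set (h := (l1 + l2 + l3 + l4)%Z) in *. set (M := (m1 + m2 + m3 + m4)%Z) in *.
  assert (HD : (h | M)%Z).
  { apply (gcd_div4 h M l1 l2 l3 l4 G).
    - exists m1. lia. - exists m2. lia. - exists m3. lia. - exists m4. lia. }
  apply Z.divide_pos_le in HD; lia.
Qed.

Lemma cx_mk (a b c : Z) : cx (a, b, c) = a. Proof. reflexivity. Qed.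
Lemma cy_mk (a b c : Z) : cy (a, b, c) = b. Proof. reflexivity. Qed.
Lemma cz_mk (a b c : Z) : cz (a, b, c) = c. Proof. reflexivity. Qed.

Lemma key (x1 x2 x3 x4 : pt) (l1 l2 l3 l4 kappa a1 a2 a3 a4 : Z) :
  fano_tetrahedron x1 x2 x3 x4 ->
  (0 <= l1)%Z -> (0 <= l2)%Z -> (0 <= l3)%Z -> (0 <= l4)%Z ->
  Z.gcd (Z.gcd (Z.gcd l1 l2) l3) l4 = 1%Z ->
  (l1 * cx x1 + l2 * cx x2 + l3 * cx x3 + l4 * cx x4 = 0)%Z ->
  (l1 * cy x1 + l2 * cy x2 + l3 * cy x3 + l4 * cy x4 = 0)%Z ->
  (l1 * cz x1 + l2 * cz x2 + l3 * cz x3 + l4 * cz x4 = 0)%Z ->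
  (2 <= kappa <= (l1 + l2 + l3 + l4) - 2)%Z ->
  ((l1 + l2 + l3 + l4) * a1 - (l1 + l2 + l3 + l4) < kappa * l1 <= (l1 + l2 + l3 + l4) * a1)%Z ->
  ((l1 + l2 + l3 + l4) * a2 - (l1 + l2 + l3 + l4) < kappa * l2 <= (l1 + l2 + l3 + l4) * a2)%Z ->
  ((l1 + l2 + l3 + l4) * a3 - (l1 + l2 + l3 + l4) < kappa * l3 <= (l1 + l2 + l3 + l4) * a3)%Z ->
  ((l1 + l2 + l3 + l4) * a4 - (l1 + l2 + l3 + l4) < kappa * l4 <= (l1 + l2 + l3 + l4) * a4)%Z ->
  (kappa + 2 <= a1 + a2 + a3 + a4)%Z.
Proof.
  intros [ND [_ LAT]] P1 P2 P3 P4 G Lx Ly Lz K B1 B2 B3 B4.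
  remember (l1 + l2 + l3 + l4)%Z as h eqn:Hh.
  remember (a1 + a2 + a3 + a4)%Z as A eqn:HA.
  assert (Hh0 : (0 < h)%Z) by lia.
  assert (E1 : (kappa * h = kappa * l1 + kappa * l2 + kappa * l3 + kappa * l4)%Z) by (subst; ring).
  assert (E2 : (h * A = h * a1 + h * a2 + h * a3 + h * a4)%Z) by (subst; ring).
  assert (HAk : (kappa <= A)%Z).
  { apply (Z.mul_le_mono_pos_l _ _ h Hh0). lia. }
  destruct (Z_le_gt_dec (kappa + 2) A) as [ok|bad]; [exact ok|exfalso].
  assert (Q1 : (0 <= (kappa + 1 - A) * l1)%Z) by (apply Z.mul_nonneg_nonneg; lia).
  assert (Q2 : (0 <= (kappa + 1 - A) * l2)%Z) by (apply Z.mul_nonneg_nonneg; lia).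
  assert (Q3 : (0 <= (kappa + 1 - A) * l3)%Z) by (apply Z.mul_nonneg_nonneg; lia).
  assert (Q4 : (0 <= (kappa + 1 - A) * l4)%Z) by (apply Z.mul_nonneg_nonneg; lia).
  assert (HL := hull_of_int x1 x2 x3 x4
    (h * a1 - kappa * l1 + (kappa + 1 - A) * l1)
    (h * a2 - kappa * l2 + (kappa + 1 - A) * l2)
    (h * a3 - kappa * l3 + (kappa + 1 - A) * l3)
    (h * a4 - kappa * l4 + (kappa + 1 - A) * l4) h
    (a1 * cx x1 + a2 * cx x2 + a3 * cx x3 + a4 * cx x4)
    (a1 * cy x1 + a2 * cy x2 + a3 * cy x3 + a4 * cy x4)
    (a1 * cz x1 + a2 * cz x2 + a3 * cz x3 + a4 * cz x4) Hh0
    ltac:(lia) ltac:(lia) ltac:(lia) ltac:(lia)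
    ltac:(subst; ring)
    ltac:(transitivity (h * (a1 * cx x1 + a2 * cx x2 + a3 * cx x3 + a4 * cx x4) + (1 - A) * (l1 * cx x1 + l2 * cx x2 + l3 * cx x3 + l4 * cx x4))%Z; [subst; ring | rewrite Lx; ring])
    ltac:(transitivity (h * (a1 * cy x1 + a2 * cy x2 + a3 * cy x3 + a4 * cy x4) + (1 - A) * (l1 * cy x1 + l2 * cy x2 + l3 * cy x3 + l4 * cy x4))%Z; [subst; ring | rewrite Ly; ring])
    ltac:(transitivity (h * (a1 * cz x1 + a2 * cz x2 + a3 * cz x3 + a4 * cz x4) + (1 - A) * (l1 * cz x1 + l2 * cz x2 + l3 * cz x3 + l4 * cz x4))%Z; [subst; ring | rewrite Lz; ring])).
  subst h.
  destruct (LAT _ HL) as [E|[E|[E|[E|E]]]];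
    pose proof (f_equal cx E) as Ex; pose proof (f_equal cy E) as Ey; pose proof (f_equal cz E) as Ez;
    unfold origin in *; rewrite ?cx_mk in Ex; rewrite ?cy_mk in Ey; rewrite ?cz_mk in Ez; clear E.
  - apply (no_dep x1 x2 x3 x4 l1 l2 l3 l4 a1 a2 a3 a4); auto; lia.
  - apply (no_dep x1 x2 x3 x4 l1 l2 l3 l4 (a1 - 1) a2 a3 a4); auto; lia.
  - apply (no_dep x1 x2 x3 x4 l1 l2 l3 l4 a1 (a2 - 1) a3 a4); auto; lia.
  - apply (no_dep x1 x2 x3 x4 l1 l2 l3 l4 a1 a2 (a3 - 1) a4); auto; lia.
  - apply (no_dep x1 x2 x3 x4 l1 l2 l3 l4 a1 a2 a3 (a4 - 1)); auto; lia.
Qed.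

Lemma nd_swap14 x1 x2 x3 x4 : nondegenerate x1 x2 x3 x4 -> nondegenerate x4 x2 x3 x1.
Proof.
  destruct x1 as [[a1 b1] c1], x2 as [[a2 b2] c2], x3 as [[a3 b3] c3], x4 as [[a4 b4] c4].
  unfold nondegenerate, det3, sub, cx, cy, cz; simpl. intros H E; apply H. lia.
Qed.
Lemma nd_swap24 x1 x2 x3 x4 : nondegenerate x1 x2 x3 x4 -> nondegenerate x1 x4 x3 x2.
Proof.
  destruct x1 as [[a1 b1] c1], x2 as [[a2 b2] c2], x3 as [[a3 b3] c3], x4 as [[a4 b4] c4].
  unfold nondegenerate, det3, sub, cx, cy, cz; simpl. intros H E; apply H. lia.
Qed.
Lemma nd_swap34 x1 x2 x3 x4 : nondegenerate x1 x2 x3 x4 -> nondegenerate x1 x2 x4 x3.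
Proof.
  destruct x1 as [[a1 b1] c1], x2 as [[a2 b2] c2], x3 as [[a3 b3] c3], x4 as [[a4 b4] c4].
  unfold nondegenerate, det3, sub, cx, cy, cz; simpl. intros H E; apply H. lia.
Qed.

Lemma oi_swap14 x1 x2 x3 x4 : origin_in_interior x1 x2 x3 x4 -> origin_in_interior x4 x2 x3 x1.
Proof.
  intros [e [He H]]; exists e; split; auto; intros a b c Ha Hb Hc.
  destruct (H a b c Ha Hb Hc) as (m1&m2&m3&m4&?&?&?&?&?&?&?&?).
  exists m4, m2, m3, m1. repeat split; lra.
Qed.
Lemma oi_swap24 x1 x2 x3 x4 : origin_in_interior x1 x2 x3 x4 -> origin_in_interior x1 x4 x3 x2.
Proof.
  intros [e [He H]]; exists e; split; auto; intros a b c Ha Hb Hc.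
  destruct (H a b c Ha Hb Hc) as (m1&m2&m3&m4&?&?&?&?&?&?&?&?).
  exists m1, m4, m3, m2. repeat split; lra.
Qed.
Lemma oi_swap34 x1 x2 x3 x4 : origin_in_interior x1 x2 x3 x4 -> origin_in_interior x1 x2 x4 x3.
Proof.
  intros [e [He H]]; exists e; split; auto; intros a b c Ha Hb Hc.
  destruct (H a b c Ha Hb Hc) as (m1&m2&m3&m4&?&?&?&?&?&?&?&?).
  exists m1, m2, m4, m3. repeat split; lra.
Qed.

Lemma pos4 (x1 x2 x3 x4 : pt) (l1 l2 l3 l4 : Z) :
  nondegenerate x1 x2 x3 x4 -> origin_in_interior x1 x2 x3 x4 ->
  (0 <= l1)%Z -> (0 <= l2)%Z -> (0 <= l3)%Z -> (0 <= l4)%Z ->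
  (0 < l1 + l2 + l3 + l4)%Z ->
  (l1 * cx x1 + l2 * cx x2 + l3 * cx x3 + l4 * cx x4 = 0)%Z ->
  (l1 * cy x1 + l2 * cy x2 + l3 * cy x3 + l4 * cy x4 = 0)%Z ->
  (l1 * cz x1 + l2 * cz x2 + l3 * cz x3 + l4 * cz x4 = 0)%Z ->
  (0 < l4)%Z.
Proof.
  intros ND [eps [Heps Hball]] P1 P2 P3 P4 Hh Lx Ly Lz.
  destruct (Z.eq_dec l4 0) as [Z4|]; [|lia]. exfalso. subst l4.
  apply IZR_lt in Hh. rewrite !plus_IZR in Hh.
  apply (f_equal IZR) in Lx, Ly, Lz.
  rewrite !plus_IZR, !mult_IZR in Lx, Ly, Lz.
  set (X := IZR (cx x4)) in *. set (Y := IZR (cy x4)) in *. set (W := IZR (cz x4)) in *.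
  set (M := (1 + Rabs X + Rabs Y + Rabs W)%R).
  assert (HM : (1 <= M)%R) by (unfold M; pose proof (Rabs_pos X); pose proof (Rabs_pos Y); pose proof (Rabs_pos W); lra).
  set (t := (eps / (2 * M))%R).
  assert (Ht : (0 < t)%R) by (unfold t; apply Rdiv_lt_0_compat; lra).
  assert (HtM : (t * M = eps / 2)%R) by (unfold t; field; lra).
  assert (Bd : forall V, (Rabs V <= M)%R -> (Rabs (- t * V) < eps)%R).
  { intros V HV. rewrite Rabs_mult, Rabs_Ropp, (Rabs_pos_eq t) by lra.
    apply Rle_lt_trans with (t * M)%R; [apply Rmult_le_compat_l; lra | lra]. }
  destruct (Hball (- t * X)%R (- t * Y)%R (- t * W)%R) as (m1&m2&m3&m4&Q1&Q2&Q3&Q4&S&Ex&Ey&Ez).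
  { apply Bd. unfold M. pose proof (Rabs_pos Y); pose proof (Rabs_pos W); lra. }
  { apply Bd. unfold M. pose proof (Rabs_pos X); pose proof (Rabs_pos W); lra. }
  { apply Bd. unfold M. pose proof (Rabs_pos Y); pose proof (Rabs_pos X); lra. }
  set (H := (IZR l1 + IZR l2 + IZR l3 + IZR 0)%R) in *.
  destruct (dep0 x1 x2 x3 x4 (H * m1 - (1 + t) * IZR l1) (H * m2 - (1 + t) * IZR l2)
              (H * m3 - (1 + t) * IZR l3) (H * (m4 + t) - (1 + t) * IZR 0) ND)
    as [_ [_ [_ D4]]].
  - transitivity (H * (m1 + m2 + m3 + m4) + H * t - (1 + t) * (IZR l1 + IZR l2 + IZR l3 + IZR 0))%R;
    [ring | rewrite S; unfold H; ring].
  - transitivity (H * (m1 * IZR (cx x1) + m2 * IZR (cx x2) + m3 * IZR (cx x3) + m4 * X + t * X)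
       - (1 + t) * (IZR l1 * IZR (cx x1) + IZR l2 * IZR (cx x2) + IZR l3 * IZR (cx x3) + IZR 0 * X))%R;
    [unfold X; ring | rewrite Lx; unfold X in *; rewrite <- Ex; ring].
  - transitivity (H * (m1 * IZR (cy x1) + m2 * IZR (cy x2) + m3 * IZR (cy x3) + m4 * Y + t * Y)
       - (1 + t) * (IZR l1 * IZR (cy x1) + IZR l2 * IZR (cy x2) + IZR l3 * IZR (cy x3) + IZR 0 * Y))%R;
    [unfold Y; ring | rewrite Ly; unfold Y in *; rewrite <- Ey; ring].
  - transitivity (H * (m1 * IZR (cz x1) + m2 * IZR (cz x2) + m3 * IZR (cz x3) + m4 * W + t * W)
       - (1 + t) * (IZR l1 * IZR (cz x1) + IZR l2 * IZR (cz x2) + IZR l3 * IZR (cz x3) + IZR 0 * W))%R;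
    [unfold W; ring | rewrite Lz; unfold W in *; rewrite <- Ez; ring].
  - assert (0 < H * (m4 + t))%R by (apply Rmult_lt_0_compat; lra).
    simpl in D4. lra.
Qed.

Lemma pair_le (h k l a b : Z) : (0 < h)%Z ->
  (h * a - h < k * l)%Z -> (h * b - h < (h - k) * l)%Z -> (a + b <= l + 1)%Z.
Proof.
  intros H0 Ha Hb.
  assert (h * (a + b) < h * (l + 2))%Z by lia.
  apply Z.mul_lt_mono_pos_l in H; lia.
Qed.

Lemma gcd_part (l h : Z) : (0 < l < h)%Z -> (4 <= h)%Z ->
  (forall k, (2 <= k <= h - 2)%Z ->
     (ceil_frac (k * l) h + ceil_frac ((h - k) * l) h = l + 1)%Z) ->
  Z.gcd l h = 1%Z.
Proof.
  intros Hl Hh Hk.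
  set (d := Z.gcd l h).
  assert (d0 : (0 <= d)%Z) by apply Z.gcd_nonneg.
  destruct (Z.gcd_divide_l l h) as [e He]. destruct (Z.gcd_divide_r l h) as [k Hk'].
  fold d in He, Hk'.
  destruct (Z.eq_dec d 1) as [|n1]; [assumption|exfalso].
  assert (d <> 0)%Z by (intro E; rewrite E in Hk'; lia).
  assert (e1 : (1 <= e)%Z) by nia.
  assert (ek : (e < k)%Z) by nia.
  assert (k2 : (2 <= k <= h - 2)%Z) by nia.
  specialize (Hk k k2).
  pose proof (ceil_bounds (k * l) h ltac:(lia)) as Ba.
  pose proof (ceil_bounds ((h - k) * l) h ltac:(lia)) as Bb.
  set (a := ceil_frac (k * l) h) in *. set (b := ceil_frac ((h - k) * l) h) in *.
  assert (E1 : (k * l = h * e)%Z) by (rewrite He, Hk'; ring).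
  assert (E2 : ((h - k) * l = h * (l - e))%Z) by (transitivity (h * l - k * l)%Z; [ring | rewrite E1; ring]).
  assert (A1 : (a - 1 < e)%Z) by (apply (Z.mul_lt_mono_pos_l h); lia).
  assert (A2 : (e <= a)%Z) by (apply (Z.mul_le_mono_pos_l _ _ h); lia).
  assert (A3 : (b - 1 < l - e)%Z) by (apply (Z.mul_lt_mono_pos_l h); lia).
  assert (A4 : (l - e <= b)%Z) by (apply (Z.mul_le_mono_pos_l _ _ h); lia).
  lia.
Qed.

Theorem corollary2p6 (x1 x2 x3 x4 : pt) (l1 l2 l3 l4 : Z) :
  fano_tetrahedron x1 x2 x3 x4 ->
  (0 <= l1)%Z -> (0 <= l2)%Z -> (0 <= l3)%Z -> (0 <= l4)%Z ->
  Z.gcd (Z.gcd (Z.gcd l1 l2) l3) l4 = 1%Z ->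
  (l1 * cx x1 + l2 * cx x2 + l3 * cx x3 + l4 * cx x4 = 0)%Z ->
  (l1 * cy x1 + l2 * cy x2 + l3 * cy x3 + l4 * cy x4 = 0)%Z ->
  (l1 * cz x1 + l2 * cz x2 + l3 * cz x3 + l4 * cz x4 = 0)%Z ->
  let h := (l1 + l2 + l3 + l4)%Z in
  (forall kappa : Z, (2 <= kappa <= h - 2)%Z ->
     (ceil_frac (kappa * l1) h + ceil_frac (kappa * l2) h
      + ceil_frac (kappa * l3) h + ceil_frac (kappa * l4) h = kappa + 2)%Z) /\
  Z.gcd l1 h = 1%Z /\ Z.gcd l2 h = 1%Z /\ Z.gcd l3 h = 1%Z /\ Z.gcd l4 h = 1%Z.
Proof.
  intros F P1 P2 P3 P4 G Lx Ly Lz h.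
  assert (Hh0 : (0 < h)%Z).
  { destruct (Z.eq_dec h 0) as [E|]; [|unfold h in *; lia].
    assert (l1 = 0 /\ l2 = 0 /\ l3 = 0 /\ l4 = 0)%Z as (->&->&->&->) by (unfold h in E; lia).
    simpl in G. discriminate. }
  pose proof F as [ND [OI _]].
  assert (Q4 : (0 < l4)%Z) by (apply (pos4 x1 x2 x3 x4 l1 l2 l3 l4); auto).
  assert (Q1 : (0 < l1)%Z) by
    (apply (pos4 x4 x2 x3 x1 l4 l2 l3 l1); auto using nd_swap14, oi_swap14; unfold h in *; lia).
  assert (Q2 : (0 < l2)%Z) by
    (apply (pos4 x1 x4 x3 x2 l1 l4 l3 l2); auto using nd_swap24, oi_swap24; unfold h in *; lia).
  assert (Q3 : (0 < l3)%Z) by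
    (apply (pos4 x1 x2 x4 x3 l1 l2 l4 l3); auto using nd_swap34, oi_swap34; unfold h in *; lia).
  assert (KEY : forall k, (2 <= k <= h - 2)%Z ->
    (k + 2 <= ceil_frac (k * l1) h + ceil_frac (k * l2) h
      + ceil_frac (k * l3) h + ceil_frac (k * l4) h)%Z).
  { intros k Hk. apply (key x1 x2 x3 x4 l1 l2 l3 l4); auto; apply ceil_bounds; exact Hh0. }
  assert (PAIR : forall k l, (ceil_frac (k * l) h + ceil_frac ((h - k) * l) h <= l + 1)%Z).
  { intros k l. pose proof (ceil_bounds (k * l) h Hh0). pose proof (ceil_bounds ((h - k) * l) h Hh0).
    apply (pair_le h k); auto; lia. }
  assert (ALL : forall k, (2 <= k <= h - 2)%Z ->
    (ceil_frac (k * l1) h + ceil_frac ((h - k) * l1) h = l1 + 1)%Z /\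
    (ceil_frac (k * l2) h + ceil_frac ((h - k) * l2) h = l2 + 1)%Z /\
    (ceil_frac (k * l3) h + ceil_frac ((h - k) * l3) h = l3 + 1)%Z /\
    (ceil_frac (k * l4) h + ceil_frac ((h - k) * l4) h = l4 + 1)%Z /\
    (ceil_frac (k * l1) h + ceil_frac (k * l2) h
      + ceil_frac (k * l3) h + ceil_frac (k * l4) h = k + 2)%Z).
  { intros k Hk. pose proof (KEY k Hk). pose proof (KEY (h - k)%Z ltac:(lia)).
    pose proof (PAIR k l1). pose proof (PAIR k l2). pose proof (PAIR k l3). pose proof (PAIR k l4).
    assert (h = l1 + l2 + l3 + l4)%Z by reflexivity. lia. }
  split; [intros k Hk; apply (ALL k Hk)|].
  assert (h4 : (4 <= h)%Z) by (unfold h; lia).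
  repeat split; apply gcd_part; try (unfold h; lia); intros k Hk; apply (ALL k Hk).
Qed.
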